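(* Let $p$ be a prime and $f\ge1$. Suppose $r_0,\dots,r_{f-1}$ are integers in $[-p,p]$ satisfying $\sum_{i=0}^{f-1}p^{f-1-i}r_i\equiv0\pmod{p^f-1}$. Then one of the following holds: (1) $(r_0,\dots,r_{f-1})=\pm(p-1,\dots,p-1)$; (2) the list $r_0,\dots,r_{f-1}$, regarded cyclically (indices mod $f$), can be partitioned into blocks of consecutive entries, each block being either all zeros $(0,\dots,0)$ or of the form $\epsilon(-1,p-1,\dots,p-1,p)$ (i.e. $r_i=-\epsilon$, $r_{i+1}=\dots=r_{i+j-1}=\epsilon(p-1)$, $r_{i+j}=\epsilon p$ for some $j\ge1$, with possibly no entries equal to $\epsilon(p-1)$), where the sign $\epsilon\in\{\pm1\}$ may depend on the block; or (3) $p=2$ and $(r_0,\dots,r_{f-1})=\pm(2,\dots,2)$. *)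

(* Defs.v *)
From HB Require Import structures.
From mathcomp Require Import all_boot all_order all_algebra.
Set Implicit Arguments. Unset Strict Implicit. Unset Printing Implicit Defensive.
Import Order.TTheory GRing.Theory Num.Theory.
Local Open Scope ring_scope.

Definition good_block (p : nat) (b : seq int) : Prop :=
  (b <> [::] /\ all (fun x => x == 0) b) \/
  exists (eps : int) (k : nat), (eps = 1 \/ eps = -1) /\
    b = [seq eps * x | x <- (-1) :: rcons (nseq k (p%:Z - 1)) p%:Z].

Definition cyclic_block_decomp (p : nat) (r : seq int) : Prop :=
  exists (s : nat) (bs : seq (seq int)),
    flatten bs = rot s r /\ (forall b, b \in bs -> good_block p b).

(* Main.v *)
Require Import Defs.
From HB Require Import structures.
From mathcomp Require Import all_boot all_order all_algebra.
From mathcomp Require Import ring lra.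
From mathcomp Require Import zify.
Import Order.TTheory GRing.Theory Num.Theory.
Local Open Scope ring_scope.

Definition gq (P : int) := fun x y : int => P * x - y.

Lemma run_lem (p : nat) (e : int) (t : seq int) :
  (e = 1 \/ e = -1) ->
  last e t = 0 -> all (fun x => `|x| <= 1) t ->
  all (fun z => `|z| <= p%:Z) (pairmap (gq p%:Z) e t) ->
  exists k u, pairmap (gq p%:Z) e t = rcons (nseq k (e * (p%:Z - 1))) (e * p%:Z) ++ pairmap (gq p%:Z) 0 u
    /\ (size u < size t)%N /\ last 0 u = 0 /\ all (fun x => `|x| <= 1) u.
Proof.
move=> He; elim: t e He => [|y t IH] e He /=.
  by move=> Ee; case: He; move=> E; rewrite E in Ee.
move=> Hl /andP[Hy Ht] /andP[Hz Hr].
have [y0|yn0] := eqVneq y 0.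
  exists 0%N, t; rewrite y0 /gq /= subr0 mulrC; split => //.
  split; first by []. split; last by []. by move: Hl; rewrite y0.
have ye : y = e.
  rewrite /gq in Hz; case: He => E; subst e; nia.
subst y.
have [k [u [E [Hs [Hlu Hu]]]]] := IH e He Hl Ht Hr.
exists k.+1, u; rewrite E /gq /=; split; last by split=> //; lia.
by congr (_ :: _); rewrite mulrBr mulr1 mulrC.
Qed.

Lemma decomp (p : nat) (bt : seq int) :
  last 0 bt = 0 -> all (fun x => `|x| <= 1) bt ->
  all (fun z => `|z| <= p%:Z) (pairmap (gq p%:Z) 0 bt) ->
  exists bs, flatten bs = pairmap (gq p%:Z) 0 bt /\
    (forall b, b \in bs -> good_block p b).
Proof.
move: {2}(size bt).+1 (ltnSn (size bt)) => n; elim: n bt => // n IH [|y t] Hs.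
  by move=> _ _ _; exists [::].
rewrite /= => Hl /andP[Hy Ht] /andP[Hz Hr].
have [y0|yn0] := eqVneq y 0.
  subst y.
  have [bs [E G]] := IH t ltac:(move: Hs => /= ; lia) Hl Ht Hr.
  exists ([:: 0] :: bs); split; first by rewrite /= E /gq mulr0 subr0.
  move=> b; rewrite inE => /orP[/eqP->|]; last exact: G.
  by left.
have He : y = 1 \/ y = -1 by lia.
have [k [u [E [Hsu [Hlu Hu]]]]] := @run_lem p y t He Hl Ht Hr.
have Hr' : all (fun z => `|z| <= p%:Z) (pairmap (gq p%:Z) 0 u).
  by move: Hr; rewrite E all_cat => /andP[].
have [bs [E' G]] := IH u ltac:(move: Hs => /=; lia) Hlu Hu Hr'.
exists ((- y :: rcons (nseq k (y * (p%:Z - 1))) (y * p%:Z)) :: bs); split.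
  by rewrite /= E E' /gq mulr0 sub0r.
move=> b; rewrite inE => /orP[/eqP->|]; last exact: G.
right; exists y, k; split => //=.
by rewrite mulrN1 map_rcons map_nseq.
Qed.
Fixpoint av (P k : int) (r : seq int) (i : nat) : int :=
  match i with 0%N => k | j.+1 => P * av P k r j - r`_j end.

Lemma av_closed P k r i :
  av P k r i = P ^+ i * k - \sum_(j < i) P ^+ (i - 1 - j) * r`_j.
Proof.
elim: i => [|i IH]; first by rewrite big_ord0 expr0 mul1r subr0.
rewrite /= IH big_ord_recr /=.
have -> : (i.+1 - 1 - i = 0)%N by lia.
rewrite expr0 mul1r mulrBr mulrA -exprS.
rewrite mulr_sumr opprD addrA; congr (_ - _ - _).
apply: eq_bigr => j _; rewrite mulrA -exprS; congr (_ ^+ _ * _).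
have := ltn_ord j; lia.
Qed.

Lemma av_prop P k r i0 j e (f : nat) :
  (forall i, (i < f)%N -> av P k r i = e -> av P k r i.+1 = e) ->
  (i0 + j <= f)%N -> av P k r i0 = e -> av P k r (i0 + j) = e.
Proof.
move=> step; elim: j => [|j IH] H H0; first by rewrite addn0.
rewrite addnS; apply: step; first lia.
apply: IH => //; lia.
Qed.
Arguments av_prop {P k r i0 j e f}.


Lemma modS' m d : (m.+1 %% d = (m %% d).+1 %% d)%N.
Proof. by rewrite -addn1 -modnDml addn1. Qed.

Lemma nth_rot_mod (T : Type) (x0 : T) (r : seq T) s n : (s < size r)%N -> (n < size r)%N ->
  nth x0 (rot s r) n = nth x0 r ((s + n) %% size r).
Proof.
move=> Hs Hn; rewrite /rot nth_cat size_drop.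
case: ltnP => h.
  by rewrite nth_drop modn_small //; lia.
rewrite nth_take; last by lia.
rewrite (_ : (s + n) = size r + (n - (size r - s)))%N; last by lia.
by rewrite modnDl modn_small //; lia.
Qed.

Lemma nseq_eq (r : seq int) f c : size r = f ->
  (forall i, (i < f)%N -> r`_i = c) -> r = nseq f c.
Proof.
move=> sz H; apply: (@eq_from_nth _ 0); first by rewrite size_nseq.
by move=> i; rewrite sz => Hi; rewrite nth_nseq Hi H.
Qed.

Theorem mainTheorem9 (p f : nat) (r : seq int) :
  prime p -> (1 <= f)%N -> size r = f ->
  all (fun x => (- (p%:Z) <= x) && (x <= p%:Z)) r ->
  ((p%:Z ^+ f - 1) %| \sum_(i < f) p%:Z ^+ (f - 1 - i) * r`_i)%Z ->
  (r = nseq f (p%:Z - 1) \/ r = nseq f (- (p%:Z - 1)))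
  \/ cyclic_block_decomp p r
  \/ (p = 2%N /\ (r = nseq f 2 \/ r = nseq f (-2))).
Proof.
move=> pr f1 sz Hall Hdiv.
have p2 := prime_gt1 pr.
have Hr i : (i < f)%N -> (- (p%:Z) <= r`_i) && (r`_i <= p%:Z).
  by move=> Hi; apply: (all_nthP 0 Hall); rewrite sz.
case/dvdzP: Hdiv => k Hk.
set P := p%:Z in Hr Hk *.
have P2 : 2 <= P by rewrite /P; lia.
pose a := av P k r.
have af : a f = k by rewrite /a av_closed Hk; ring.
have rel i : r`_i = P * a i - a i.+1 by rewrite /a /=; ring.
have cycm m : (m <= f)%N -> a (m %% f)%N = a m.
  case: (ltnP m f) => h H; first by rewrite modn_small.
  have -> : m = f by lia.
  by rewrite modnn af.
set M := \max_(i < f) absz (a i).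
have HM i : (i <= f)%N -> (absz (a i) <= M)%N.
  move=> Hi; case: (ltnP i f) => h.
    exact: (@leq_bigmax _ (fun i : 'I_f => absz (a i)) (Ordinal h)).
  have -> : i = f by lia.
  rewrite af -[k]/(a 0%N).
  exact: (@leq_bigmax _ (fun i : 'I_f => absz (a i)) (Ordinal f1)).
have [i0 Hi0] : exists i0 : 'I_f, absz (a i0) = M.
  have [|i0 E] := bigop.eq_bigmax (fun i : 'I_f => absz (a i)).
    by rewrite card_ord.
  by exists i0.
have HMb : ((p - 1) * M <= p)%N.
  have := rel i0; have := Hr i0 (ltn_ord i0); have := HM i0.+1 (ltn_ord i0).
  rewrite /P; nia.
have [[pe2 M2] | M1] : (p = 2 /\ M = 2)%N \/ (M <= 1)%N by nia.
  right; right; split => //.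
  set e := a i0.
  have He : e = 2 \/ e = -2 by rewrite /e; lia.
  have step i : (i < f)%N -> a i = e -> a i.+1 = e.
    move=> Hi Hai; have := rel i; have := Hr i Hi; have := HM i.+1 Hi.
    rewrite Hai /P pe2; case: He => ->; lia.
  have ke : k = e.
    rewrite -af (_ : f = i0 + (f - i0))%N; last by have := ltn_ord i0; lia.
    apply: (av_prop step) => //; have := ltn_ord i0; lia.
  have all_e j : (j <= f)%N -> a j = e.
    move=> Hj; rewrite -(add0n j); apply: (av_prop step) => //.
  have re j : (j < f)%N -> r`_j = e.
    move=> Hj; rewrite rel (all_e j (ltnW Hj)) (all_e j.+1 Hj) /P pe2; ring.
  by case: He => E; [left | right]; apply: nseq_eq => // j Hj; rewrite re // E.
have Ha1 i : (i <= f)%N -> `|a i| <= 1.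
  by move=> Hi; have := HM i Hi; lia.
case: (boolP (has (fun i => a i == 0) (iota 0 f))) => Hhas.
  right; left.
  case/hasP: Hhas => s; rewrite mem_iota add0n => /andP[_ Hs] /eqP as0.
  pose cyc m := a (m %% f)%N.
  have crel m : r`_(m %% f) = P * cyc m - cyc m.+1.
    by rewrite rel /cyc modS' (cycm (m %% f).+1) // (ltn_pmod m f1).
  pose bt := [seq cyc (s + j.+1)%N | j <- iota 0 f].
  have Ebt : pairmap (gq P) 0 bt = rot s r.
    apply: (@eq_from_nth _ 0); first by rewrite size_pairmap size_map size_iota size_rot sz.
    rewrite size_pairmap size_map size_iota => n Hn.
    rewrite (nth_pairmap 0) ?size_map ?size_iota // nth_rot_mod ?sz //.
    rewrite (nth_map 0%N) ?size_iota // nth_iota // add0n.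
    have -> : nth 0 (0 :: bt) n = cyc (s + n)%N.
      case: n Hn => [|n] Hn /=.
        by rewrite /cyc addn0 modn_small.
      rewrite (nth_map 0%N) ?size_iota ?nth_iota ?add0n //; lia.
    by rewrite /gq addnS; exact: (esym (crel _)).
  have Hl : last 0 bt = 0.
    rewrite -nth_last size_map size_iota (nth_map 0%N) ?size_iota; last by lia.
    rewrite nth_iota; last by lia.
    rewrite add0n prednK // /cyc modnDr modn_small //.
  have Hb : all (fun x => `|x| <= 1) bt.
    apply/allP => x /mapP [j _ ->]; rewrite /cyc; apply: Ha1.
    exact: ltnW (ltn_pmod _ f1).
  have Hq : all (fun z => `|z| <= p%:Z) (pairmap (gq p%:Z) 0 bt).
    rewrite -/P Ebt; apply/allP => z; rewrite mem_rot => Hz.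
    by have := allP Hall z Hz; rewrite -/P; lia.
  have [bs [E G]] := @decomp p bt Hl Hb Hq.
  exists s, bs; split => //; by rewrite E -/P Ebt.
have Hnz i : (i < f)%N -> a i != 0.
  by move=> Hi; apply: (hasPn Hhas); rewrite mem_iota add0n.
left.
set e := a 0%N.
have He : e = 1 \/ e = -1.
  have := Ha1 0%N (leq0n _); have := Hnz 0%N f1; rewrite /e; lia.
have step i : (i < f)%N -> a i = e -> a i.+1 = e.
  move=> Hi Hai.
  have Hn : a i.+1 != 0.
    case: (ltnP i.+1 f) => h; first exact: Hnz.
    have -> : i.+1 = f by lia.
    by rewrite af -[k]/(a 0%N) Hnz.
  have := rel i; have := Hr i Hi; have := Ha1 i.+1 Hi; move: Hn.
  rewrite Hai; case: He => ->; nia.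
have all_e j : (j <= f)%N -> a j = e.
  move=> Hj; rewrite -(add0n j); apply: (av_prop step) => //.
have re j : (j < f)%N -> r`_j = P * e - e.
  by move=> Hj; rewrite rel (all_e j (ltnW Hj)) (all_e j.+1 Hj).
by case: He => E; [left | right]; apply: nseq_eq => // j Hj; rewrite re // E; ring.
Qed.
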